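(* Let $n\ge1$ and $\bm{N}=(N_0,\ldots,N_{n-1},-\sum_{i=0}^{n-1}N_i)$ with integers $N_i>0$. Let $s_k=\sum_{j=0}^kN_j$ (with $s_{-1}=0$) and for $1\le k\le n$ let \[ c_k=\frac{s_{n-k}}{k}-\frac{s_{n-k-1}}{k+1}=\frac{N_{n-k}}{k+1}+\frac{s_{n-k}}{k(k+1)}. \] Then the uniform average of the vertices of $\mathcal{F}_n(\bm{N})$ is the flow $\bm{f}$ with $f_{ij}=c_{n-i}$ for all $0\le i<j\le n$. (Equivalently, in the $n\times n$ matrix form the row $i$ entries $a_{ij}$ with $i+j\le n-1$ equal $c_{n-i}$, and the entry $a_{k',n-k'}$ for $1\le k'\le n-1$ in the row with label $k=n-k'$ equals $b_k=\frac{k}{k+1}s_{n-k-1}$.)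
   Context: $\mathcal{F}_n(\bm{N})$ is the polytope of $\bm{f}=(f_{ij})_{0\le i<j\le n}\in\mathbb{R}_{\ge0}^{\binom{n+1}{2}}$ with $\sum_{j>i} f_{ij}-\sum_{k<i} f_{ki}=N_i$ for every $i\in\{0,\ldots,n\}$. The uniform average of vertices is the arithmetic mean of its (finitely many) vertices. The matrix form of $\bm f$ is $(a_{ij})_{0\le i,j\le n-1}$ with $a_{ij}=f_{i,n-j}$ for $i+j\le n-1$, $a_{i,n-i}=\sum_{k<i}(N_k-f_{k,i})$ for $1\le i\le n-1$, zero otherwise. *)

(* Defs.v *)
From HB Require Import structures.
From mathcomp Require Import all_boot all_order all_algebra.
From mathcomp Require Import reals.
Unset Printing Implicit Defensive.
Import Order.TTheory GRing.Theory Num.Theory.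
Local Open Scope ring_scope.

(* A flow f = (f_ij)_{0<=i<j<=n} is encoded as an (n+1)x(n+1) matrix whose
   entries outside the strict upper triangle are 0 (an isometric embedding of
   R^{binom(n+1,2)}). *)

Definition netN {R : realType} (n : nat) (N : nat -> nat) (i : 'I_n.+1) : R :=
  if (i < n)%N then (N i)%:R else - (\sum_(j < n) (N j)%:R).

Definition flow_polytope {R : realType} (n : nat) (N : nat -> nat)
  (f : 'M[R]_n.+1) : Prop :=
  (forall i j : 'I_n.+1, ~~ (i < j)%N -> f i j = 0) /\
  (forall i j : 'I_n.+1, 0 <= f i j) /\
  (forall i : 'I_n.+1,
     \sum_(j < n.+1 | (i < j)%N) f i j - \sum_(k < n.+1 | (k < i)%N) f k i
     = netN n N i).

Definition is_vertex {R : realType} {m : nat} (P : 'M[R]_m -> Prop)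
  (x : 'M[R]_m) : Prop :=
  P x /\ forall (y z : 'M[R]_m) (t : R), P y -> P z -> 0 < t < 1 ->
    x = t *: y + (1 - t) *: z -> y = z.

Definition uniform_average {R : realType} {m : nat} (V : seq 'M[R]_m) : 'M[R]_m :=
  (size V)%:R^-1 *: \sum_(v <- V) v.

(* s_{k-1} = sum_{j<k} N_j  (so S 0 = s_{-1} = 0) *)
Definition Ssum {R : realType} (N : nat -> nat) (k : nat) : R :=
  \sum_(j < k) (N j)%:R.

Definition cc {R : realType} (n : nat) (N : nat -> nat) (k : nat) : R :=
  Ssum N (n - k).+1 / k%:R - Ssum N (n - k) / k.+1%:R.

Definition avg_flow {R : realType} (n : nat) (N : nat -> nat) : 'M[R]_n.+1 :=
  \matrix_(i < n.+1, j < n.+1) (if (i < j)%N then cc n N (n - i) else 0).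

(* Main.v *)
Require Import Defs.
From HB Require Import structures.
From mathcomp Require Import all_boot all_order all_algebra.
From mathcomp Require Import reals.
From mathcomp Require Import ring lra zify.
Import Order.TTheory GRing.Theory Num.Theory.
Local Open Scope ring_scope.

Section Flow.
Variable R : realType.
Variable n : nat.
Variable N : nat -> nat.

Local Notation I := 'I_n.+1.
Local Notation MX := 'M[R]_n.+1.

Definition netf (f : MX) (i : I) : R :=
  \sum_(j < n.+1 | (i < j)%N) f i j - \sum_(k < n.+1 | (k < i)%N) f k i.

Lemma netf_sum (f : MX) : \sum_i netf f i = 0.
Proof.
rewrite /netf sumrB.
rewrite (exchange_big_dep (fun _ => true)) //=.
by rewrite subrr.
Qed.

Lemma netfD (f g : MX) (c : R) i : netf (f + c *: g) i = netf f i + c * netf g i.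
Proof.
rewrite /netf.
under eq_bigr do rewrite !mxE.
under [X in _ - X]eq_bigr do rewrite !mxE.
rewrite !big_split /= -!mulr_sumr; ring.
Qed.

Lemma netf_all (f : MX) :
  (forall i : I, (i < n)%N -> netf f i = (N i)%:R) ->
  forall i, netf f i = netN n N i.
Proof.
move=> H i; rewrite /netN.
case: ifP => hi; first exact: H.
have -> : i = ord_max by apply/val_inj => /=; move: (ltn_ord i); lia.
have := netf_sum f; rewrite big_ord_recr /=.
rewrite (eq_bigr (fun j : 'I_n => (N j)%:R)); last first.
  by move=> j _; rewrite H //=.
move/eqP; rewrite addrC addr_eq0 => /eqP ->.
by [].
Qed.

Definition chT := {ffun I -> I}.
Definition valid (s : chT) : bool :=
  [forall i : I, if (i < n)%N then (i < s i)%N else s i == i].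

Fixpoint outF (s : chT) (m : nat) (i : I) : R :=
  match m with
  | 0 => 0
  | m'.+1 => (N i)%:R + \sum_(k < n.+1 | (k < i)%N && (s k == i)) outF s m' k
  end.
Definition out (s : chT) (i : I) : R := outF s i.+1 i.

Lemma outF_stable s : forall b m (i : I), (m <= b)%N -> (i < m)%N ->
  outF s m i = out s i.
Proof.
rewrite /out; elim=> [|b IH] [|m] i //= hm hi.
congr (_ + _); apply: eq_bigr => k /andP[hk _].
rewrite IH; [|lia|lia].
by rewrite (IH i k); [|lia|lia].
Qed.

Lemma out_rec (s : chT) (i : I) : out s i = (N i)%:R + \sum_(k < n.+1 | (k < i)%N && (s k == i)) out s k.
Proof.
rewrite {1}/out /=; congr (_ + _); apply: eq_bigr => k /andP[hk _].
exact: (@outF_stable s i i k (leqnn i) hk).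
Qed.

Lemma outF_ge0 s m i : 0 <= outF s m i.
Proof.
elim: m i => [|m IH] i //=; apply: addr_ge0; first exact: ler0n.
by apply: sumr_ge0 => k _.
Qed.

Lemma out_geN (s : chT) (i : I) : (N i)%:R <= out s i.
Proof.
rewrite out_rec lerDl; by apply: sumr_ge0 => k _; apply: outF_ge0.
Qed.

Lemma out_ge0 (s : chT) (i : I) : 0 <= out s i.
Proof. exact: outF_ge0. Qed.

Definition flowOf (s : chT) : MX :=
  \matrix_(i, j) (if (i < n)%N && (s i == j) then out s i else 0).

Lemma validP {s : chT} {i : I} : valid s -> (i < n)%N -> (i < s i)%N.
Proof. by move=> /forallP /(_ i); case: ifP. Qed.

Lemma validPn {s : chT} {i : I} : valid s -> ~~ (i < n)%N -> s i = i.
Proof. by move=> /forallP /(_ i); case: ifP => // _ /eqP. Qed.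

Lemma flowOf_poly s : valid s -> flow_polytope n N (flowOf s).
Proof.
move=> vs; split; [|split].
- move=> i j hij; rewrite mxE; case: ifP => // /andP[hi /eqP hs].
  by move: (validP vs hi); rewrite hs (negbTE hij).
- by move=> i j; rewrite mxE; case: ifP => // _; apply: out_ge0.
- apply: netf_all => i hi; rewrite /netf.
  rewrite (bigD1 (s i)) /=; last exact: validP.
  rewrite mxE hi eqxx /= big1; last first.
    by move=> j /andP[_ hj]; rewrite mxE hi /= eq_sym (negbTE hj).
  rewrite addr0.
  rewrite (eq_bigr (fun k => if (s k == i) then out s k else 0)); last first.
    by move=> k hk; rewrite mxE; have -> : (k < n)%N by lia.
  rewrite -big_mkcondr /= [out s i]out_rec; ring.
Qed.

Lemma flowOf_uniq (s : chT) (y : MX) : valid s -> flow_polytope n N y ->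
  (forall i j, y i j != 0 -> (i < n)%N && (s i == j)) -> y = flowOf s.
Proof.
move=> vs [hlow [hge hnet]] hsupp.
have key : forall m (i : I), (i < m)%N -> forall j, y i j = flowOf s i j.
  elim=> [|m IH] i // hi j.
  rewrite mxE; case: ifP => [/andP[hin /eqP <-]|hf]; last first.
    by apply/eqP; apply: contraFT hf => /hsupp.
  have := hnet i; rewrite /netN hin /= => hn.
  rewrite (bigD1 (s i)) /= in hn; last exact: validP.
  rewrite big1 ?addr0 in hn; last first.
    move=> j' /andP[_ hj']; apply/eqP; apply: contraNT hj' => /hsupp /andP[_ /eqP ->].
    by [].
  rewrite (eq_bigr (fun k => if (s k == i) then out s k else 0)) in hn; last first.
    move=> k hk; rewrite IH; last lia.
    by rewrite mxE; have -> : (k < n)%N by lia.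
  rewrite -big_mkcondr /= in hn.
  rewrite out_rec -hn; ring.
apply/matrixP => i j; exact: (key i.+1).
Qed.

Hypothesis Npos : forall i, (i < n)%N -> (0 < N i)%N.

Lemma out_gt0 (s : chT) (i : I) : (i < n)%N -> 0 < out s i.
Proof.
move=> hi; apply: lt_le_trans (out_geN s i); rewrite ltr0n; exact: Npos.
Qed.

Lemma flowOf_inj : {in valid &, injective flowOf}.
Proof.
move=> s t vs vt e; apply/ffunP => i.
case hi: (i < n)%N; last first.
  by rewrite (validPn vs) ?hi // (validPn vt) ?hi.
have := @out_gt0 s i hi; move/matrixP: e => /(_ i (s i)); rewrite !mxE hi eqxx /=.
case: ifP => [/eqP -> //|_ ->]; by rewrite ltxx.
Qed.

Lemma conv0 {t u v : R} : 0 < t < 1 -> 0 <= u -> 0 <= v ->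
  t * u + (1 - t) * v = 0 -> u = 0 /\ v = 0.
Proof.
move=> /andP[t0 t1] u0 v0 e.
have h1 : 0 <= t * u by apply: mulr_ge0 => //; exact: ltW.
have h2 : 0 <= (1 - t) * v by apply: mulr_ge0 => //; rewrite subr_ge0 ltW.
move/eqP: e; rewrite paddr_eq0 // => /andP[/eqP a /eqP b].
move/eqP: a; rewrite mulf_eq0 (gt_eqF t0) /= => /eqP ->.
move/eqP: b; rewrite mulf_eq0 subr_eq0 (gt_eqF t1) /= => /eqP ->.
by [].
Qed.

Lemma flowOf_vertex (s : chT) : valid s -> is_vertex (flow_polytope n N) (flowOf s).
Proof.
move=> vs; split; first exact: flowOf_poly.
move=> y z t Py Pz ht e.
have supp : forall a b : I, ~~ ((a < n)%N && (s a == b)) -> y a b = 0 /\ z a b = 0.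
  move=> a b hab; move/matrixP: e => /(_ a b); rewrite !mxE (negbTE hab) => e.
  case: Py => _ [Py _]; case: Pz => _ [Pz _].
  apply: (conv0 ht (Py a b) (Pz a b)); by rewrite e.
have -> : y = flowOf s.
  apply: flowOf_uniq => // a b; apply: contraR => /supp [-> _]; by rewrite eqxx.
apply/esym; apply: flowOf_uniq => // a b; apply: contraR => /supp [_ ->]; by rewrite eqxx.
Qed.

Lemma netf0 v : netf 0 v = 0.
Proof. by rewrite /netf !big1 ?subrr // => j _; rewrite mxE. Qed.

Lemma netfA (f g : MX) v : netf (f + g) v = netf f v + netf g v.
Proof. by have := netfD f g 1 v; rewrite scale1r mul1r. Qed.

Lemma netfN (f g : MX) v : netf (f - g) v = netf f v - netf g v.
Proof. by have := netfD f g (-1) v; rewrite scaleN1r mulN1r. Qed.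

Lemma sum_eq1 (P : pred I) (b : I) : \sum_(j | P j) ((j == b)%:R : R) = (P b)%:R.
Proof.
rewrite big_mkcond /= (bigD1 b) //= big1 ?addr0.
  by case: (P b); rewrite ?eqxx.
by move=> j /negbTE ->; case: (P j).
Qed.

Lemma netf_delta (a b v : I) : (a < b)%N ->
  netf (delta_mx a b) v = (v == a)%:R - (v == b)%:R.
Proof.
move=> hab; rewrite /netf.
under eq_bigr do rewrite mxE.
under [X in _ - X]eq_bigr do rewrite mxE.
have [-> | va] := eqVneq v a.
  have ab : (a == b) = false by apply/eqP => e; move: hab; rewrite e ltnn.
  by rewrite ab /= sum_eq1 hab big1 ?subr0 // => k _; rewrite andbF.
rewrite /= big1 ?sub0r; last by [].
have [-> | vb] := eqVneq v b.
  under eq_bigr do rewrite andbT.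
  by rewrite sum_eq1 hab.
by rewrite big1 ?oppr0 // => k _; rewrite andbF.
Qed.

Definition nx (x : MX) (j : I) : I := odflt ord_max [pick j' | 0 < x j j'].

Fixpoint pm (x : MX) (k : nat) (j : I) : MX :=
  match k with
  | 0 => 0
  | k'.+1 => if (j < n)%N then delta_mx j (nx x j) + pm x k' (nx x j) else 0
  end.

Section Path.
Variable x : MX.
Hypothesis Px : flow_polytope n N x.

Lemma nx_pos {j : I} : (j < n)%N -> 0 < x j (nx x j).
Proof.
move=> hj; rewrite /nx; case: pickP => [j' //|h0].
case: Px => hlow [hge hnet].
have := hnet j; rewrite /netN hj /netf big1; last first.
  by move=> j' _; apply/eqP; rewrite eq_le hge andbT leNgt h0.
move=> e; have : (0 < (N j)%:R :> R) by rewrite ltr0n; exact: Npos.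
have hs : 0 <= \sum_(k < n.+1 | (k < j)%N) x k j by apply: sumr_ge0.
move=> hN; exfalso; lra.
Qed.

Lemma pos_lt (a b : I) : 0 < x a b -> (a < b)%N.
Proof.
move=> h; apply: contraTT h => hab; case: Px => hlow _; by rewrite hlow // ltxx.
Qed.

Lemma nx_gt {j : I} : (j < n)%N -> (j < nx x j)%N.
Proof. by move=> hj; apply: pos_lt; apply: nx_pos. Qed.

Lemma pm_supp k : forall (j a b : I), pm x k j a b != 0 -> 0 < x a b /\ (j <= a)%N.
Proof.
elim: k => [|k IH] j a b /=; first by rewrite mxE eqxx.
case: ifP => hj; last by rewrite mxE eqxx.
rewrite !mxE.
have [/andP[/eqP -> /eqP ->] _|hd] := boolP ((a == j) && (b == nx x j)).
  by split; [apply: nx_pos|].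
rewrite /= mulr0n add0r => /IH [h1 h2]; split => //.
have := nx_gt hj; lia.
Qed.

Lemma pm_net k : forall (j : I), (n - j <= k)%N -> forall v,
  netf (pm x k j) v = (v == j)%:R - (v == ord_max)%:R.
Proof.
elim: k => [|k IH] j hk v /=.
  have -> : j = ord_max by apply/val_inj => /=; move: (ltn_ord j); lia.
  by rewrite netf0 subrr.
case: ifP => hj; last first.
  have -> : j = ord_max by apply/val_inj => /=; move: (ltn_ord j); lia.
  by rewrite netf0 subrr.
rewrite netfA netf_delta ?nx_gt // IH; last by have := nx_gt hj; lia.
ring.
Qed.

End Path.
Arguments pos_lt {x} Px {a b} _.
Arguments nx_pos {x} Px {j} _.
Arguments nx_gt {x} Px {j} _.
Arguments pm_supp {x} Px {k j a b} _.
Arguments pm_net {x} Px {k j} _ v.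

Lemma perturb (x d : MX) (a0 b0 : I) : flow_polytope n N x ->
  (forall v, netf d v = 0) -> (forall a b, d a b != 0 -> 0 < x a b) ->
  d a0 b0 != 0 -> ~ is_vertex (flow_polytope n N) x.
Proof.
move=> Px hd hs hne [_ hv].
have [hlow [hge hnet]] := Px.
pose M := \sum_(p : I * I) `|d p.1 p.2| / x p.1 p.2.
have M0 : 0 <= M by apply: sumr_ge0 => p _; apply: divr_ge0.
pose e := (1 + M)^-1.
have M1 : 0 < 1 + M by lra.
have e0 : 0 < e by rewrite invr_gt0.
have bnd : forall c a b, `|c| = e -> `|c * d a b| <= x a b.
  move=> c a b hc; have [dz|dnz] := eqVneq (d a b) 0.
    by rewrite dz mulr0 normr0.
  have xp := hs a b dnz.
  have t : `|d a b| / x a b <= M.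
    rewrite /M (bigD1 (a, b)) //= lerDl; apply: sumr_ge0 => p _; exact: divr_ge0.
  rewrite ler_pdivrMr // in t.
  rewrite normrM hc /e mulrC ler_pdivrMr //; nra.
have Pc : forall c, `|c| = e -> flow_polytope n N (x + c *: d).
  move=> c hc; split; [|split].
  - move=> a b hab; rewrite !mxE hlow //.
    have -> : d a b = 0.
      by apply/eqP; apply: contraNT hab => /hs h; exact: (pos_lt Px h).
    by rewrite mulr0 addr0.
  - move=> a b; rewrite !mxE; have := bnd c a b hc; rewrite ler_norml; lra.
  - by move=> i; rewrite -/(netf _ i) netfD hd mulr0 addr0; apply: hnet.
have e1 : `|e| = e by rewrite gtr0_norm.
have e2 : `|- e| = e by rewrite normrN.
have := hv _ _ (2^-1) (Pc e e1) (Pc (- e) e2).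
have h2 : 0 < (2^-1 : R) < 1 by apply/andP; split; lra.
move=> /(_ h2) h.
have : x + e *: d = x + (- e) *: d.
  by apply: h; apply/matrixP => i j; rewrite !mxE; field.
move/matrixP => /(_ a0 b0); rewrite !mxE => /eqP.
rewrite (inj_eq (addrI _)) mulNr -subr_eq0 opprK -mulr2n mulrn_eq0 /= mulf_eq0.
by rewrite (gt_eqF e0) (negbTE hne).
Qed.

Lemma vertex_row (x : MX) : is_vertex (flow_polytope n N) x ->
  forall (i j1 j2 : I), 0 < x i j1 -> 0 < x i j2 -> j1 = j2.
Proof.
move=> hv i j1 j2 h1 h2; have Px := hv.1.
apply/eqP; apply: contraT => hne; exfalso.
have l1 := pos_lt Px h1; have l2 := pos_lt Px h2.
pose d := pm x n.+1 j1 + delta_mx i j1 - delta_mx i j2 - pm x n.+1 j2.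
apply: (@perturb x d i j1 Px _ _ _ hv).
- move=> v; rewrite /d !netfN netfA !pm_net // ?netf_delta //; [ring|lia|lia].
- move=> a b; apply: contraLR => hx; rewrite negbK.
  have p0 : forall k (j : I), pm x k j a b = 0.
    by move=> k j; apply/eqP; apply: contraNT hx => /(pm_supp Px) [].
  rewrite /d !mxE !p0.
  case: (boolP ((a == i) && (b == j1))) => [/andP[/eqP ea /eqP eb]|hn1].
    by rewrite ea eb h1 in hx.
  case: (boolP ((a == i) && (b == j2))) => [/andP[/eqP ea /eqP eb]|hn2].
    by rewrite ea eb h2 in hx.
  by rewrite /= !subr0 add0r.
- rewrite /d !mxE.
  have p1 : forall k (j : I), (i < j)%N -> pm x k j i j1 = 0.
    move=> k j hj; apply/eqP; apply: contraTT hj => /(pm_supp Px) [_]; lia.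
  rewrite !p1 // !eqxx /= eq_sym (negbTE hne) /=.
  by rewrite add0r !subr0 eq_sym oner_neq0.
Qed.

Lemma vertex_flow (x : MX) : is_vertex (flow_polytope n N) x ->
  exists2 s, valid s & x = flowOf s.
Proof.
move=> hv; have Px := hv.1; have [hlow [hge hnet]] := Px.
pose s : chT := finfun (fun i : I => if (i < n)%N then nx x i else i).
have vs : valid s.
  apply/forallP => i; case: ifP => hi; rewrite ffunE hi //; exact: (nx_gt Px hi).
exists s => //; apply: flowOf_uniq => // a b hab.
have hp : 0 < x a b by rewrite lt_def hab hge.
have la := pos_lt Px hp.
have an : (a < n)%N by move: (ltn_ord b); lia.
rewrite an /= ffunE an; apply/eqP; exact: (@vertex_row x hv a (nx x a) b (nx_pos Px an) hp).
Qed.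

Definition sw (j j' z : I) : I := if z == j then j' else if z == j' then j else z.

Lemma swK (j j' : I) : involutive (sw j j').
Proof.
move=> z; rewrite /sw.
have [-> | zj] := eqVneq z j.
  rewrite eqxx; have [-> //|] := eqVneq j' j.
  by [].
have [-> | zj'] := eqVneq z j'.
  by rewrite eqxx.
by rewrite (negbTE zj) (negbTE zj').
Qed.

Lemma sw_eq (j j' z : I) : (sw j' j z == j) = (z == j').
Proof.
rewrite /sw; have [e1|h1] := eqVneq z j'; first by rewrite !eqxx.
have [e2|h2] := eqVneq z j; first by rewrite e2 in h1; rewrite eq_sym (negbTE h1).
by rewrite (negbTE h2).
Qed.

Definition swp (i j j' : I) (s : chT) : chT :=
  finfun (fun k : I => if k == i then sw j j' (s k) else s k).

Lemma swpK (i j j' : I) : involutive (swp i j j').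
Proof.
move=> s; apply/ffunP => k; rewrite !ffunE.
by case: eqP => // _; rewrite swK.
Qed.

Lemma out_agree (s t : chT) (i : I) : (forall k : I, (k < i)%N -> s k = t k) ->
  forall k : I, (k <= i)%N -> out s k = out t k.
Proof.
move=> hst.
have h : forall m (k : I), (k <= i)%N -> outF s m k = outF t m k.
  elim=> [|m IH] k hk //=; congr (_ + _).
  apply: eq_big => k'.
    case hk': (k' < k)%N => //=; rewrite hst //; lia.
  move=> /andP[hk' _]; apply: IH; lia.
by move=> k hk; apply: h.
Qed.

Lemma swp_valid (i j j' : I) (s : chT) : (i < n)%N -> (i < j)%N -> (i < j')%N ->
  valid s -> valid (swp i j j' s).
Proof.
move=> hi hj hj' vs; apply/forallP => k; rewrite ffunE.
have := forallP vs k.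
have [-> | ki] := eqVneq k i; last by [].
rewrite hi => his.
rewrite /sw; case: eqP => // _; case: eqP => //.
Qed.

Lemma swp_out (i j j' : I) (s : chT) : out (swp i j j' s) i = out s i.
Proof.
apply: out_agree => // k hk; rewrite ffunE.
by case: eqP => // e; move: hk; rewrite e ltnn.
Qed.

Definition G (i j : I) : R := \sum_(s | valid s && (s i == j)) out s i.

Lemma G_sym (i j j' : I) : (i < n)%N -> (i < j)%N -> (i < j')%N -> G i j = G i j'.
Proof.
move=> hi hj hj'; rewrite /G (reindex_inj (can_inj (swpK i j' j))).
apply: eq_big => s.
  have -> : valid (swp i j' j s) = valid s.
    apply/idP/idP => [v|]; last exact: swp_valid.
    by rewrite -[s](swpK i j' j); apply: swp_valid.
  by rewrite ffunE eqxx sw_eq.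
by move=> _; rewrite swp_out.
Qed.

Definition Sv : {set chT} := [set s | valid s].
Definition T (i : I) : R := \sum_(s | valid s) out s i.
Definition Qn (k : nat) : R := Ssum N k.+1 / (n - k)%:R - Ssum N k / (n - k).+1%:R.

Lemma sum_valid_const (c : R) : \sum_(s | valid s) c = c *+ #|Sv|.
Proof. by rewrite -sumr_const; apply: eq_bigl => s; rewrite inE. Qed.

Lemma count_gt (i : I) : \sum_(j < n.+1 | (i < j)%N) (1 : R) = (n - i)%:R.
Proof.
have := big_geq_mkord (op := +%R) i.+1 n.+1 xpredT (fun _ => (1 : R)).
rewrite sumr_const_nat subSS => <-.
by [].
Qed.

Lemma T_G (i : I) : (i < n)%N -> T i = (n - i)%:R * G i ord_max.
Proof.
move=> hi; rewrite /T.
rewrite (eq_bigr (fun s : chT => \sum_(j < n.+1 | (i < j)%N) (if s i == j then out s i else 0))); last first.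
  move=> s vs; rewrite (bigD1 (s i)) /= ?(validP vs hi) // eqxx big1 ?addr0 //.
  by move=> j /andP[_ hj]; rewrite eq_sym (negbTE hj).
rewrite exchange_big /=.
rewrite (eq_bigr (fun _ => G i ord_max)); last first.
  move=> j hj; rewrite -(@G_sym i j) //.
  by rewrite /G big_mkcondr.
by rewrite -[X in _ = X * _]count_gt mulr_suml; apply: eq_bigr => j _; rewrite mul1r.
Qed.

Lemma T_rec (i : I) : (i < n)%N ->
  T i = (N i)%:R *+ #|Sv| + \sum_(k < n.+1 | (k < i)%N) G k i.
Proof.
move=> hi; rewrite /T.
under eq_bigr do rewrite out_rec.
rewrite big_split /= sum_valid_const; congr (_ + _).
under eq_bigr do rewrite big_mkcondr.
rewrite exchange_big /=; apply: eq_bigr => k hk.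
by rewrite /G big_mkcondr.
Qed.

Lemma Qn_tele (i : nat) : (i <= n)%N -> \sum_(k < i) Qn k = Ssum N i / (n - i).+1%:R.
Proof.
move=> hi.
pose f (k : nat) : R := Ssum N k / (n - k).+1%:R.
transitivity (\sum_(0 <= k < i) (f k.+1 - f k)).
  rewrite big_mkord; apply: eq_bigr => k _; rewrite /Qn /f.
  have -> : (n - k.+1).+1 = (n - k)%N by move: (ltn_ord k); lia.
  by [].
by rewrite telescope_sumr // /f /Ssum big_ord0 mul0r subr0.
Qed.

Lemma main_ind (m : nat) : forall i : I, (i < m)%N -> (i < n)%N ->
  T i = (n - i)%:R * (#|Sv|%:R * Qn i).
Proof.
elim: m => [//|m IH] i him hi.
rewrite T_rec //.
have Gk : forall k : I, (k < i)%N -> G k i = #|Sv|%:R * Qn k.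
  move=> k hk.
  have hkn : (k < n)%N by lia.
  rewrite (@G_sym k i ord_max) //.
  have := @T_G k hkn; rewrite (IH k) //; last by lia.
  move=> e; apply: (mulfI (x := (n - k)%:R)); first by rewrite pnatr_eq0; lia.
  by rewrite -e.
rewrite (eq_bigr (fun k : I => #|Sv|%:R * Qn k)); last by move=> k hk; apply: Gk.
rewrite -mulr_sumr.
rewrite (eq_bigl (fun k : I => true && (k < i)%N)) //.
rewrite (big_ord_narrow_cond (n1 := i) (ltnW (ltn_ord i))) /=.
rewrite Qn_tele; last by lia.
rewrite /Qn /Ssum big_ord_recr /= -/(Ssum N i).
rewrite -mulr_natr -natr1.
have h1 : (n - i)%:R != 0 :> R by rewrite pnatr_eq0; lia.
have h2 : (n - i)%:R + 1 != 0 :> R.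
  by rewrite natr1 pnatr_eq0.
field.
by rewrite h1 h2.
Qed.

End Flow.

Theorem proposition4p1 (R : realType) (n : nat) (N : nat -> nat) :
  (0 < n)%N -> (forall i, (i < n)%N -> (0 < N i)%N) ->
  (exists V : seq 'M[R]_n.+1,
      uniq V /\ forall x, x \in V <-> is_vertex (flow_polytope n N) x) /\
  (forall V : seq 'M[R]_n.+1,
      uniq V -> (forall x, x \in V <-> is_vertex (flow_polytope n N) x) ->
      uniform_average V = avg_flow n N).
Proof.
move=> hn Npos.
pose Vs := map (flowOf R n N) (enum (Sv n)).
have VsU : uniq Vs.
  rewrite map_inj_in_uniq ?enum_uniq // => s t.
  rewrite !mem_enum !inE => hs ht; exact: (@flowOf_inj R n N Npos s t hs ht).
have VsM : forall x, x \in Vs <-> is_vertex (flow_polytope n N) x.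
  move=> x; split.
    by move/mapP => [s hs ->]; apply: flowOf_vertex; rewrite mem_enum inE in hs.
  by move/(@vertex_flow R n N Npos x) => [s vs ->]; apply: map_f; rewrite mem_enum inE.
split; first by exists Vs.
move=> V VU VM.
have pe : perm_eq V Vs.
  by apply: uniq_perm => // x; apply/idP/idP => [/VM /VsM | /VsM /VM].
rewrite /uniform_average (perm_size pe) (perm_big _ pe) /= size_map -cardE big_map big_enum /=.
have K0 : #|Sv n|%:R != 0 :> R.
  rewrite pnatr_eq0; apply/eqP => /card0_eq /(_ (finfun (fun _ : 'I_n.+1 => ord_max))).
  rewrite inE => /negP; apply; apply/forallP => i; rewrite ffunE.
  case: ifP => //= hi; apply/eqP/val_inj => /=; move: (ltn_ord i); lia.
apply/matrixP => i j; rewrite !mxE summxE.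
case: ifP => hij; last first.
  rewrite big1 ?mulr0 // => s; rewrite inE => vs.
  by have [hl _] := @flowOf_poly R n N s vs; rewrite hl ?hij.
have hi : (i < n)%N by move: (ltn_ord j); lia.
rewrite (eq_bigr (fun s : chT n => if s i == j then out R n N s i else 0)); last first.
  by move=> s _; rewrite mxE hi.
rewrite (eq_bigl (fun s : chT n => valid n s)); last by move=> s; rewrite inE.
rewrite -big_mkcondr -/(G R n N i j) (@G_sym R n N i j ord_max) //.
have := @T_G R n N i hi; rewrite (@main_ind R n N i.+1 i) // => e.
have -> : G R n N i ord_max = #|Sv n|%:R * Qn R n N i.
  apply: (mulfI (x := (n - i)%:R)); first by rewrite pnatr_eq0; lia.
  by rewrite -e.
rewrite mulrA mulVf // mul1r /Qn /cc subKn //; lia.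
Qed.
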